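(* Let $\rho_0=\sum_{n=1}^Np_n|n\rangle\langle n|$ be a density matrix on $\mathbb{C}^N$ ($N\ge2$) with eigenvalues in decreasing order $p_1\ge p_2\ge\dots\ge p_N$, and let $\gamma>0$. For Hermitian $G$ put $$QFI(\rho_0,G)=2\sum_{i\neq j}\frac{(p_i-p_j)^2}{p_i+p_j}|G_{ij}|^2,\qquad G_{ij}=\langle i|G|j\rangle,$$ where terms with $p_i+p_j=0$ are omitted. Then $$\max_{G=G^\dagger,\ \mathrm{Tr}[G^2]\le2\gamma^2}QFI(\rho_0,G)=4\gamma^2\frac{(p_1-p_N)^2}{p_1+p_N}.$$ The maximum is attained by a Hermitian $G$ with $|G_{1N}|=|G_{N1}|=\gamma$ and all other matrix elements (including diagonal ones) equal to $0$.
   Context: The expression $QFI(\rho_0,G)$ is the quantum Fisher information of the unitary family $\rho_\lambda=e^{-i\lambda G}\rho_0e^{i\lambda G}$ at $\lambda=0$. *)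

(* Defs.v *)
From HB Require Import structures.
From mathcomp Require Import all_boot all_order all_algebra.
From mathcomp Require Import complex.
Set Implicit Arguments. Unset Strict Implicit. Unset Printing Implicit Defensive.
Import Order.TTheory GRing.Theory Num.Theory.
Local Open Scope ring_scope.

Definition rc (R : rcfType) (x : R) : R[i] := real_complex R x.

Definition is_hermitian (R : rcfType) (N : nat) (G : 'M[R[i]]_N) : Prop :=
  forall i j : 'I_N, G j i = (G i j)^*.

(* QFI(rho0, G) for rho0 = diag(p_1,...,p_N) in the eigenbasis |n>:
   2 * sum_{i <> j, p_i + p_j <> 0} (p_i - p_j)^2/(p_i + p_j) |G_ij|^2. *)
Definition QFI (R : rcfType) (N : nat) (p : 'I_N -> R) (G : 'M[R[i]]_N) : R[i] :=
  2 * \sum_(i < N) \sum_(j < N | (i != j) && (p i + p j != 0))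
        rc ((p i - p j) ^+ 2 / (p i + p j)) * `|G i j| ^+ 2.

(* Main.v *)
Require Import Defs.
From HB Require Import structures.
From mathcomp Require Import all_boot all_order all_algebra.
From mathcomp Require Import complex.
From mathcomp Require Import ring lra.
Import Order.TTheory GRing.Theory Num.Theory.
Local Open Scope ring_scope.

Lemma key (R : realFieldType) (A a b B : R) :
  0 <= B -> B <= b -> b <= a -> a <= A -> 0 < a + b ->
  (a - b) ^+ 2 / (a + b) <= (A - B) ^+ 2 / (A + B).
Proof.
move=> h0 h1 h2 h3 h4.
have hAB : 0 < A + B by lra.
rewrite ler_pdivrMr // mulrAC ler_pdivlMr //.
set x := a - b. set y := A - a. set z := b - B.
have -> : A - B = x + y + z by rewrite /x /y /z; ring.
have -> : A + B = x + y + z + 2 * B by rewrite /x /y /z; ring.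
have -> : a + b = x + 2 * z + 2 * B by rewrite /x /y /z; ring.
have hx : 0 <= x by rewrite /x; lra.
have hy : 0 <= y by rewrite /y; lra.
have hz : 0 <= z by rewrite /z; lra.
clearbody x y z.
rewrite -subr_ge0.
have -> : (x + y + z) ^+ 2 * (x + 2 * z + 2 * B) - x ^+ 2 * (x + y + z + 2 * B)
  = x ^+ 2 * y + 3 * (x ^+ 2 * z) + 4 * (x * (y + z) * z) + 4 * (x * (y + z) * B)
    + (y + z) ^+ 2 * (x + 2 * z + 2 * B) by ring.
have hyz : 0 <= y + z by lra.
have hw : 0 <= x + 2 * z + 2 * B by lra.
have t1 : 0 <= x ^+ 2 * y by rewrite mulr_ge0 ?sqr_ge0.
have t2 : 0 <= x ^+ 2 * z by rewrite mulr_ge0 ?sqr_ge0.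
have t3 : 0 <= x * (y + z) * z by rewrite !mulr_ge0.
have t4 : 0 <= x * (y + z) * B by rewrite !mulr_ge0.
have t5 : 0 <= (y + z) ^+ 2 * (x + 2 * z + 2 * B) by rewrite mulr_ge0 ?sqr_ge0.
lra.
Qed.

Lemma tr_herm (R : rcfType) (N : nat) (G : 'M[R[i]]_N) : is_hermitian G ->
  \tr (G *m G) = \sum_(i < N) \sum_(j < N) `|G i j| ^+ 2.
Proof.
move=> hG; rewrite /mxtrace; apply: eq_bigr => i _.
rewrite mxE; apply: eq_bigr => j _.
by rewrite (hG i j) normCK.
Qed.

Lemma rcM (R : rcfType) (x y : R) : rc x * rc y = rc (x * y).
Proof. by rewrite /rc rmorphM. Qed.
Lemma rc2 (R : rcfType) : 2 = rc (2 : R).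
Proof. by rewrite /rc rmorphMn rmorph1. Qed.
Lemma rc_ge0 (R : rcfType) (x : R) : (0 <= rc x) = (0 <= x).
Proof. exact: ler0c. Qed.
Lemma rc_le (R : rcfType) (x y : R) : (rc x <= rc y) = (x <= y).
Proof. exact: lecR. Qed.

Lemma sum2 (V : nmodType) (N : nat) (a b : 'I_N) (F : 'I_N -> 'I_N -> V) :
  a != b ->
  (forall i j, ~~ (((i == a) && (j == b)) || ((i == b) && (j == a))) -> F i j = 0) ->
  \sum_i \sum_j F i j = F a b + F b a.
Proof.
move=> hab hF.
rewrite (bigD1 a) //= (bigD1 b) //= big1 ?addr0; last first.
  by move=> j hj; apply: hF; rewrite eqxx (negbTE hj) /= (negbTE hab).
rewrite (bigD1 b) 1?eq_sym //= (bigD1 a) //= big1 ?addr0; last first.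
  by move=> j hj; apply: hF; rewrite eqxx (negbTE hj) eq_sym (negbTE hab).
rewrite big1 ?addr0 // => i /andP [hia hib].
by apply: big1 => j _; apply: hF; rewrite (negbTE hia) (negbTE hib).
Qed.

Lemma fle (R : rcfType) (n : nat) (p : 'I_n.+2 -> R) :
  (forall i, 0 <= p i) ->
  (forall i j : 'I_n.+2, (i <= j)%N -> p j <= p i) ->
  forall i j, p i + p j != 0 ->
  (p i - p j) ^+ 2 / (p i + p j) <= (p ord0 - p ord_max) ^+ 2 / (p ord0 + p ord_max).
Proof.
move=> h0 hm.
have gen : forall i j : 'I_n.+2, (i <= j)%N -> p i + p j != 0 ->
  (p i - p j) ^+ 2 / (p i + p j) <= (p ord0 - p ord_max) ^+ 2 / (p ord0 + p ord_max).
  move=> i j hij hne; apply: key.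
  - exact: h0.
  - by apply: hm; exact: leq_ord.
  - exact: hm.
  - exact: hm.
  - by rewrite lt0r hne addr_ge0.
move=> i j hne; case: (leqP i j) => hij; first exact: gen.
have -> : (p i - p j) ^+ 2 / (p i + p j) = (p j - p i) ^+ 2 / (p j + p i).
  by rewrite [p i + _]addrC; congr (_ / _); ring.
by apply: gen; [exact: ltnW | rewrite addrC].
Qed.

Theorem mainTheorem6 (R : rcfType) (n : nat) (p : 'I_n.+2 -> R) (gamma : R) :
  (forall i, 0 <= p i) ->
  \sum_(i < n.+2) p i = 1 ->
  (forall i j : 'I_n.+2, (i <= j)%N -> p j <= p i) ->
  0 < gamma ->
  (forall G : 'M[R[i]]_n.+2, is_hermitian G ->
     \tr (G *m G) <= rc (2 * gamma ^+ 2) ->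
     QFI p G <= rc (4 * gamma ^+ 2 * (p ord0 - p ord_max) ^+ 2 / (p ord0 + p ord_max)))
  /\
  (exists G : 'M[R[i]]_n.+2,
     [/\ is_hermitian G,
         \tr (G *m G) <= rc (2 * gamma ^+ 2),
         `|G ord0 ord_max| = rc gamma /\ `|G ord_max ord0| = rc gamma,
         (forall i j : 'I_n.+2, ~ ((i == ord0) && (j == ord_max)) ->
            ~ ((i == ord_max) && (j == ord0)) -> G i j = 0) &
         QFI p G = rc (4 * gamma ^+ 2 * (p ord0 - p ord_max) ^+ 2 / (p ord0 + p ord_max))]).
Proof.
move=> h0 h1 hm hg.
set M := (p ord0 - p ord_max) ^+ 2 / (p ord0 + p ord_max).
have hM : 0 <= M by rewrite /M divr_ge0 ?sqr_ge0 ?addr_ge0.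
have -> : 4 * gamma ^+ 2 * (p ord0 - p ord_max) ^+ 2 / (p ord0 + p ord_max)
   = 2 * (M * (2 * gamma ^+ 2)) by rewrite /M; ring.
split.
  move=> G hG htr.
  rewrite /QFI -rcM -rc2.
  rewrite ler_pM2l ?ltr0n //.
  apply: (@le_trans _ _ (rc M * \tr (G *m G))); last first.
    by rewrite -rcM; apply: ler_wpM2l; rewrite ?rc_ge0.
  rewrite tr_herm // mulr_sumr; apply: ler_sum => i _.
  rewrite mulr_sumr big_mkcond /=; apply: ler_sum => j _.
  case: ifP => [/andP [hij hne] | _].
    by rewrite ler_wpM2r ?exprn_ge0 // rc_le fle.
  by rewrite mulr_ge0 ?exprn_ge0 // rc_ge0.
have hab : (ord0 : 'I_n.+2) != ord_max by [].
pose G : 'M[R[i]]_n.+2 := \matrix_(i, j)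
  (if ((i == ord0) && (j == ord_max)) || ((i == ord_max) && (j == ord0)) then rc gamma else 0).
have hgC : 0 <= rc gamma by rewrite rc_ge0 ltW.
have hG : is_hermitian G.
  move=> i j; rewrite !mxE orbC [(j == ord0) && _]andbC [(j == ord_max) && _]andbC.
  by case: ifP => _; rewrite ?conjC0 // geC0_conj.
have hnorm : forall i j, `|G i j| ^+ 2 =
    if ((i == ord0) && (j == ord_max)) || ((i == ord_max) && (j == ord0)) then rc gamma ^+ 2 else 0.
  by move=> i j; rewrite mxE; case: ifP => _; rewrite ?normr0 ?expr0n // ger0_norm.
have hp0 : 0 < p ord0 + p ord_max.
  have : 0 < p ord0.
    rewrite lt_neqAle h0 andbT eq_sym; apply/eqP => e.
    have hz : \sum_(i < n.+2) p i = 0.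
      apply: big1 => i _.
      by apply/le_anti; rewrite h0 andbT -[X in _ <= X]e hm.
    by move: h1; rewrite hz => /eqP; rewrite eq_sym oner_eq0.
  have := h0 ord_max; lra.
exists G; split => //.
- rewrite tr_herm // (@sum2 _ _ ord0 ord_max _ hab); last first.
    by move=> i j /negbTE hc; rewrite hnorm hc.
  have e : forall x : R, rc x + rc x = rc (2 * x) by move=> x; rewrite /rc -rmorphD mulr2n mulrDl mul1r.
  by rewrite !hnorm !eqxx !andbT !orbT /= expr2 rcM -expr2 e.
- by split; rewrite !mxE !eqxx !andbT ?orbT /= ger0_norm.
- move=> i j /negP/negbTE h1' /negP/negbTE h2'; by rewrite mxE h1' h2'.
- rewrite /QFI.
  under eq_bigr => i _ do rewrite big_mkcond.
  rewrite (@sum2 _ _ ord0 ord_max _ hab); last first.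
    by move=> i j /negbTE hc; case: ifP => // _; rewrite hnorm hc mulr0.
  have hne1 : p ord0 + p ord_max != 0 by rewrite lt0r_neq0.
  have hne2 : p ord_max + p ord0 != 0 by rewrite addrC.
  rewrite hab hne1 hne2 /= !hnorm !eqxx !andbT ?orbT /=.
  have e2 : forall x y : R, rc x + rc y = rc (x + y) by move=> x y; rewrite /rc rmorphD.
  have eg : rc gamma ^+ 2 = rc (gamma ^+ 2) by rewrite /rc rmorphXn.
  rewrite eg !rcM e2 rc2 rcM /M [p ord_max + p ord0]addrC; congr (rc _); ring.
Qed.
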